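(* Let $d\ge 3$. Each generator $a_i$ ($1\le i\le d$) has infinite order in $G_d$.
   Context: Let $d\ge 3$, $X=\{1,\dots,d\}$, $T$ the $d$-regular rooted tree with vertex set $X^*$. $\mathrm{Aut}(T)$ is the group of root-preserving automorphisms with product left-to-right: $(gh)(u)=h(g(u))$. Sections $g|_u$ are defined by $g(uv)=g(u)\,g|_u(v)$; we write $g=(g|_1,\dots,g|_d)\lambda_g$ with $\lambda_g\in S_d$ the action on the first level; $e$ is the identity; $\overline{j}\in\{1,\dots,d\}$ denotes $j$ mod $d$. $G_d=\langle a_1,\dots,a_d\rangle\le\mathrm{Aut}(T)$ where $a_i$ acts on the first level as $(i\ \overline{i+1})$, with $a_i|_i=a_i$, $a_i|_{\overline{i+1}}=a_{\overline{i+1}}$, and $a_i|_x=e$ otherwise. *)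

(* Defs.v *)
From mathcomp Require Import all_boot.
Set Implicit Arguments. Unset Strict Implicit. Unset Printing Implicit Defensive.

(* Alphabet X = {1,...,d}; vertices of T are words over X, i.e. seq nat whose
   letters all lie in [1, d]. *)
Definition is_letter (d x : nat) : bool := (1 <= x <= d).
Definition is_vertex (d : nat) (u : seq nat) : bool := all (is_letter d) u.

(* \overline{j} : j mod d taken in {1,...,d}; used here for i+1. *)
Definition nxt (d i : nat) : nat := if i == d then 1 else i.+1.

(* The generator a_i of G_d, as a map on words (vertices of T):
   a_i = (a_i|_1, ..., a_i|_d) (i  \overline{i+1}) with a_i|_i = a_i,
   a_i|_{\overline{i+1}} = a_{\overline{i+1}}, a_i|_x = e otherwise. *)
Fixpoint gen_a (d i : nat) (u : seq nat) : seq nat :=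
  match u with
  | [::] => [::]
  | x :: w =>
      if x == i then nxt d i :: gen_a d i w
      else if x == nxt d i then i :: gen_a d (nxt d i) w
      else x :: w
  end.

(* n-th power of a tree automorphism g (product g h = "g then h", so
   g^n(u) = g(g(...g(u))) ). *)
Definition aut_pow (g : seq nat -> seq nat) (n : nat) (u : seq nat) : seq nat :=
  iter n g u.

Definition is_identity_aut (d : nat) (g : seq nat -> seq nat) : Prop :=
  forall u, is_vertex d u -> g u = u.

(* Main.v *)
Require Import Defs.
From mathcomp Require Import all_boot.
From mathcomp Require Import zify.

Set Implicit Arguments. Unset Strict Implicit. Unset Printing Implicit Defensive.

Section Main.
Variable d : nat.
Hypothesis d3 : 3 <= d.

Definition step k x := if x == k then nxt d k else if x == nxt d k then k else x.
Definition sec1 k x : seq nat :=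
  if x == k then [:: k] else if x == nxt d k then [:: nxt d k] else [::].
Definition pm (g : seq nat) (x : nat) := foldl (fun y k => step k y) x g.
Fixpoint sc (g : seq nat) x : seq nat :=
  match g with [::] => [::] | k :: g' => sec1 k x ++ sc g' (step k x) end.
Definition appg (g : seq nat) u := foldl (fun v k => gen_a d k v) u g.

Lemma appg_cat s1 s2 u : appg (s1 ++ s2) u = appg s2 (appg s1 u).
Proof. by rewrite /appg foldl_cat. Qed.

Lemma gen_cons k x w : gen_a d k (x :: w) = step k x :: appg (sec1 k x) w.
Proof. by rewrite /= /step /sec1; case: (x == k) => //; case: (x == nxt d k). Qed.

Lemma appg_cons g x w : appg g (x :: w) = pm g x :: appg (sc g x) w.
Proof.
elim: g x w => [|k g IH] x w; first by [].
rewrite (_ : appg (k :: g) (x :: w) = appg g (gen_a d k (x :: w))) //.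
by rewrite gen_cons IH appg_cat.
Qed.

Lemma pm_cons k g x : pm (k :: g) x = pm g (step k x).
Proof. by []. Qed.
Lemma sc_cons k g x : sc (k :: g) x = sec1 k x ++ sc g (step k x).
Proof. by []. Qed.
Lemma pm_nil x : pm [::] x = x.
Proof. by []. Qed.
Lemma sc_nil x : sc [::] x = [::].
Proof. by []. Qed.

Lemma pm_cat s1 s2 x : pm (s1 ++ s2) x = pm s2 (pm s1 x).
Proof. by rewrite /pm foldl_cat. Qed.

Lemma sc_cat s1 s2 x : sc (s1 ++ s2) x = sc s1 x ++ sc s2 (pm s1 x).
Proof. elim: s1 x => [|k s IH] x //=. by rewrite IH catA. Qed.

Lemma nxt_lt k : k < d -> nxt d k = k.+1.
Proof. move=> h; rewrite /nxt ifF //; apply/eqP; lia. Qed.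

Lemma step_eq k : k < d -> step k k = k.+1 /\ sec1 k k = [:: k].
Proof. by move=> h; rewrite /step /sec1 eqxx nxt_lt. Qed.

Lemma step_nx k : k < d -> step k k.+1 = k /\ sec1 k k.+1 = [:: k.+1].
Proof.
move=> h; rewrite /step /sec1 nxt_lt // (_ : (k.+1 == k) = false) ?eqxx //.
by apply/eqP; lia.
Qed.

Lemma step_out k x : k < d -> x != k -> x != k.+1 -> step k x = x /\ sec1 k x = [::].
Proof. by move=> h h1 h2; rewrite /step /sec1 nxt_lt // (negbTE h1) (negbTE h2). Qed.

Lemma step_dd : step d d = 1 /\ sec1 d d = [:: d].
Proof. by rewrite /step /sec1 eqxx /nxt eqxx. Qed.

Lemma step_d1 : step d 1 = d /\ sec1 d 1 = [:: 1].
Proof.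
rewrite /step /sec1 /nxt eqxx (_ : (1 == d) = false) //.
by apply/eqP; lia.
Qed.

Lemma step_dout x : x != d -> x != 1 -> step d x = x /\ sec1 d x = [::].
Proof. by move=> h1 h2; rewrite /step /sec1 /nxt eqxx (negbTE h1) (negbTE h2). Qed.

Lemma iota_out a m x : a + m <= d -> (x < a) || (a + m < x) ->
  pm (iota a m) x = x /\ sc (iota a m) x = [::].
Proof.
elim: m a => [|m IH] a h hx //.
rewrite /= -/(pm _ _).
have [e1 e2] := @step_out a x ltac:(lia) ltac:(apply/eqP; lia) ltac:(apply/eqP; lia).
rewrite e1 e2 /=; apply: IH; lia.
Qed.

Lemma iota_a a m : 0 < m -> a + m <= d ->
  pm (iota a m) a = a + m /\ sc (iota a m) a = iota a m.
Proof.
elim: m a => [//|m IH] a _ h.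
rewrite /= -/(pm _ _).
have [e1 e2] := @step_eq a ltac:(lia).
rewrite e1 e2 /=.
case: m IH h => [|m] IH h; first by rewrite addn1.
have [f1 f2] := IH a.+1 isT ltac:(lia).
by rewrite f1 f2 addSnnS.
Qed.

Lemma iota_in a m x : a + m <= d -> a < x <= a + m ->
  pm (iota a m) x = x.-1 /\ sc (iota a m) x = [:: x].
Proof.
elim: m a => [|m IH] a h hx; first by lia.
rewrite /= -/(pm _ _).
case: (eqVneq x a.+1) => [->|hne].
  have [e1 e2] := @step_nx a ltac:(lia).
  rewrite e1 e2 /=.
  have [f1 f2] := @iota_out a.+1 m a ltac:(lia) ltac:(lia).
  by rewrite f1 f2.
have [e1 e2] := @step_out a x ltac:(lia) ltac:(apply/eqP; lia) hne.
rewrite e1 e2 /=; apply: IH; lia.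
Qed.

Fixpoint dn a m : seq nat := match m with 0 => [::] | m'.+1 => (a + m') :: dn a m' end.

Lemma dn_split a m : dn a m.+1 = dn a.+1 m ++ [:: a].
Proof.
elim: m => [|m IH] /=; first by rewrite addn0.
by rewrite -IH /= addSnnS.
Qed.

Lemma dn_out a m x : a + m <= d -> (x < a) || (a + m < x) ->
  pm (dn a m) x = x /\ sc (dn a m) x = [::].
Proof.
elim: m => [|m IH] h hx //.
rewrite /= -/(pm _ _).
have [e1 e2] := @step_out (a + m) x ltac:(lia) ltac:(apply/eqP; lia) ltac:(apply/eqP; lia).
rewrite e1 e2 /=; apply: IH; lia.
Qed.

Lemma dn_in a m x : a + m <= d -> a <= x < a + m ->
  pm (dn a m) x = x.+1 /\ sc (dn a m) x = [:: x].
Proof.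
elim: m => [|m IH] h hx; first by lia.
rewrite /= -/(pm _ _).
case: (eqVneq x (a + m)) => [->|hne].
  have [e1 e2] := @step_eq (a + m) ltac:(lia).
  rewrite e1 e2 /=.
  have [f1 f2] := @dn_out a m (a + m).+1 ltac:(lia) ltac:(lia).
  by rewrite f1 f2.
have [e1 e2] := @step_out (a + m) x ltac:(lia) hne ltac:(apply/eqP; lia).
rewrite e1 e2 /=; apply: IH; lia.
Qed.

Lemma dn_top a m : a + m <= d -> 0 < m ->
  pm (dn a m) (a + m) = a /\ sc (dn a m) (a + m) = dn a.+1 m.
Proof.
elim: m => [//|m IH] h _.
rewrite /= -/(pm _ _) addnS.
have [e1 e2] := @step_nx (a + m) ltac:(lia).
rewrite e1 e2 /=.
case: m IH h {e1 e2} => [|m] IH h; first by rewrite !addn0.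
have [f1 f2] := IH ltac:(lia) isT.
by rewrite f1 f2 addSn.
Qed.

Definition IdG g n := forall u, is_vertex d u -> iter n (appg g) u = u.

Fixpoint powsec g x t : seq nat :=
  match t with 0 => [::] | t'.+1 => powsec g x t' ++ sc g (iter t' (pm g) x) end.

Lemma powsecS g x t : powsec g x t.+1 = powsec g x t ++ sc g (iter t (pm g) x).
Proof. by []. Qed.

Lemma iter_appg g x w t :
  iter t (appg g) (x :: w) = iter t (pm g) x :: appg (powsec g x t) w.
Proof.
elim: t => // t IH.
by rewrite iterS IH appg_cons /= appg_cat.
Qed.

Lemma powsec_add g x a b :
  powsec g x (a + b) = powsec g x a ++ powsec g (iter a (pm g) x) b.
Proof.
elim: b => [|b IH]; first by rewrite addn0 cats0.
by rewrite addnS /= IH -catA addnC iterD.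
Qed.

Lemma iter_per g x l q : iter l (pm g) x = x -> iter (q * l) (pm g) x = x.
Proof. move=> h; elim: q => // q IH; by rewrite mulSn iterD IH h. Qed.

Lemma powsec_mul g x l q w : iter l (pm g) x = x ->
  appg (powsec g x (q * l)) w = iter q (appg (powsec g x l)) w.
Proof.
move=> h; elim: q w => [|q IH] w //.
by rewrite mulSn powsec_add appg_cat h IH iterSr.
Qed.

Lemma vertex_cons x w : is_letter d x -> is_vertex d w -> is_vertex d (x :: w).
Proof. by rewrite /is_vertex /= => -> ->. Qed.

Lemma descent g x l n : is_letter d x -> 0 < l -> iter l (pm g) x = x ->
  (forall t, 0 < t < l -> iter t (pm g) x != x) -> IdG g n ->
  l %| n /\ IdG (powsec g x l) (n %/ l).
Proof.
move=> Hx Hl Hper Hne HI.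
have := HI [:: x] (@vertex_cons x [::] Hx isT).
rewrite iter_appg => -[Hn _].
have Hr : n %% l = 0.
  move: Hn; rewrite {1}(divn_eq n l) addnC iterD iter_per // => Hr.
  case: (posnP (n %% l)) => // Hpos.
  have := Hne (n %% l); rewrite Hpos ltn_pmod // Hr eqxx => /(_ isT) //.
have E : n = n %/ l * l by rewrite {1}(divn_eq n l) Hr addn0.
split; first by rewrite /dvdn Hr.
move=> u Hu.
have := HI (x :: u) (vertex_cons Hx Hu).
rewrite iter_appg => -[_].
by rewrite -powsec_mul // -E.
Qed.

Definition Pw := iota 1 d.
Definition Qw := [:: 2; 1; d] ++ dn 3 (d - 3).
Definition Ww m := iota 1 m ++ dn 2 (m - 2).

Lemma iota_snoc a n : iota a n.+1 = iota a n ++ [:: a + n].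
Proof. by rewrite -addn1 iotaD. Qed.

Lemma Pw_split : Pw = iota 1 d.-1 ++ [:: d].
Proof.
rewrite /Pw -{1}(prednK (ltnW (ltnW d3))) iota_snoc add1n prednK //; lia.
Qed.

Lemma pmP2 : pm Pw 2 = d /\ sc Pw 2 = [:: 2; 1].
Proof.
rewrite Pw_split pm_cat sc_cat.
have [e1 e2] := @iota_in 1 d.-1 2 ltac:(lia) ltac:(lia).
rewrite e1 e2 /=.
by have [f1 f2] := step_d1; rewrite f1 f2.
Qed.

Lemma pmPy y : 3 <= y <= d -> pm Pw y = y.-1 /\ sc Pw y = [:: y].
Proof.
move=> hy; rewrite Pw_split pm_cat sc_cat.
have [e1 e2] := @iota_in 1 d.-1 y ltac:(lia) ltac:(lia).
rewrite e1 e2 /=.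
have [f1 f2] := @step_dout y.-1 ltac:(apply/eqP; lia) ltac:(apply/eqP; lia).
by rewrite f1 f2.
Qed.

Lemma P_cycle t : 0 < t <= d - 1 ->
  iter t (pm Pw) 2 = d.+1 - t /\ powsec Pw 2 t = [:: 2; 1] ++ dn (d.+2 - t) t.-1.
Proof.
elim: t => [//|t IH] ht.
case: t IH ht => [|t] IH ht.
  rewrite /=; have [e1 e2] := pmP2; by rewrite e1 e2 subn1.
have [i1 i2] := IH ltac:(lia).
rewrite iterS powsecS i1 i2.
have [e1 e2] := @pmPy (d.+1 - t.+1) ltac:(lia).
rewrite e1 e2; split; first by rewrite [RHS]subnS.
rewrite -catA !succnK (_ : d.+2 - t.+2 = d.+1 - t.+1); last by lia.
rewrite (_ : d.+2 - t.+1 = (d.+1 - t.+1).+1); last by lia.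
by rewrite [in RHS]dn_split.
Qed.

Lemma pmQ1 : pm Qw 1 = 2 /\ sc Qw 1 = [:: 1].
Proof.
rewrite /Qw pm_cat sc_cat !pm_cons !sc_cons pm_nil sc_nil.
have [a1 a2] := @step_out 2 1 ltac:(lia) isT isT.
have [b1 b2] := @step_eq 1 ltac:(lia).
have [c1 c2] := @step_dout 2 ltac:(apply/eqP; lia) isT.
rewrite a1 a2 b1 b2 c1 c2.
have [f1 f2] := @dn_out 3 (d - 3) 2 ltac:(lia) ltac:(lia).
by rewrite f1 f2.
Qed.

Lemma pmQ2 : pm Qw 2 = (if d == 3 then 1 else 4) /\ sc Qw 2 = [:: 2; 3].
Proof.
rewrite /Qw pm_cat sc_cat !pm_cons !sc_cons pm_nil sc_nil.
have [a1 a2] := @step_eq 2 ltac:(lia).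
have [b1 b2] := @step_out 1 3 ltac:(lia) isT isT.
rewrite a1 a2 b1 b2.
case: eqP => hd.
  have [c1 c2] : step d 3 = 1 /\ sec1 d 3 = [:: 3].
    by rewrite /step /sec1 /nxt -hd eqxx.
  by rewrite c1 c2 hd.
have [c1 c2] := @step_dout 3 ltac:(apply/eqP; lia) isT.
rewrite c1 c2 /=.
have [f1 f2] := @dn_in 3 (d - 3) 3 ltac:(lia) ltac:(lia).
by rewrite f1 f2.
Qed.

Lemma pmQy y : 4 <= y <= d ->
  pm Qw y = (if y == d then 1 else y.+1) /\ sc Qw y = [:: y].
Proof.
move=> hy.
rewrite /Qw pm_cat sc_cat !pm_cons !sc_cons pm_nil sc_nil.
have [a1 a2] := @step_out 2 y ltac:(lia) ltac:(apply/eqP; lia) ltac:(apply/eqP; lia).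
have [b1 b2] := @step_out 1 y ltac:(lia) ltac:(apply/eqP; lia) ltac:(apply/eqP; lia).
rewrite a1 a2 b1 b2.
case: eqP => hd.
  subst y. have [c1 c2] := step_dd. rewrite c1 c2.
  have [f1 f2] := @dn_out 3 (d - 3) 1 ltac:(lia) ltac:(lia).
  by rewrite f1 f2.
have [c1 c2] := @step_dout y ltac:(apply/eqP; lia) ltac:(apply/eqP; lia).
rewrite c1 c2 /=.
have [f1 f2] := @dn_in 3 (d - 3) y ltac:(lia) ltac:(lia).
by rewrite f1 f2.
Qed.

Lemma Q_cycle t : 2 <= t <= d - 1 ->
  iter t (pm Qw) 1 = (if t == d.-1 then 1 else t.+2) /\ powsec Qw 1 t = iota 1 t.+1.
Proof.
elim: t => [//|t IH] ht.
case: t IH ht => [//|t] IH ht.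
case: t IH ht => [|t] IH ht.
  rewrite (_ : iter 2 (pm Qw) 1 = pm Qw (pm Qw 1)) //.
  rewrite (_ : powsec Qw 1 2 = sc Qw 1 ++ sc Qw (pm Qw 1)) //.
  have [e1 e2] := pmQ1. rewrite e1 e2.
  have [f1 f2] := pmQ2. rewrite f1 f2.
  split=> //.
  case: eqP => h1; case: eqP => h2 //; lia.
have [i1 i2] := IH ltac:(lia).
rewrite iterS powsecS i1 i2.
rewrite ifF; last by apply/eqP; lia.
have [e1 e2] := @pmQy t.+4 ltac:(lia).
rewrite e1 e2; split.
  case: eqP => h1; case: eqP => h2 //; lia.
by rewrite [iota 1 t.+4]iota_snoc.
Qed.

Lemma W_at1 m : 2 <= m < d -> pm (Ww m) 1 = m.+1 /\ sc (Ww m) 1 = iota 1 m.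
Proof.
move=> hm; rewrite /Ww pm_cat sc_cat.
have [e1 e2] := @iota_a 1 m ltac:(lia) ltac:(lia).
rewrite e1 e2.
have [f1 f2] := @dn_out 2 (m - 2) (1 + m) ltac:(lia) ltac:(lia).
by rewrite f1 f2 ?cats0 ?add1n.
Qed.

Lemma W_atm m : 2 <= m < d -> pm (Ww m) m.+1 = 2 /\ sc (Ww m) m.+1 = m.+1 :: dn 3 (m - 2).
Proof.
move=> hm; rewrite /Ww pm_cat sc_cat.
have [e1 e2] := @iota_in 1 m m.+1 ltac:(lia) ltac:(lia).
rewrite e1 e2 /=.
case: (eqVneq m 2) => [->|hne]; first by [].
have [f1 f2] := @dn_top 2 (m - 2) ltac:(lia) ltac:(lia).
rewrite (_ : 2 + (m - 2) = m) in f1 f2; last by lia.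
by rewrite f1 f2.
Qed.

Lemma W_at2 m : 2 <= m < d -> pm (Ww m) 2 = 1 /\ sc (Ww m) 2 = [:: 2].
Proof.
move=> hm; rewrite /Ww pm_cat sc_cat.
have [e1 e2] := @iota_in 1 m 2 ltac:(lia) ltac:(lia).
rewrite e1 e2 /=.
have [f1 f2] := @dn_out 2 (m - 2) 1 ltac:(lia) ltac:(lia).
by rewrite f1 f2.
Qed.

Lemma W_d : pm (Ww d) 1 = 1 /\ sc (Ww d) 1 = Pw.
Proof.
rewrite /Ww -/Pw Pw_split -catA pm_cat sc_cat.
have [e1 e2] := @iota_a 1 d.-1 ltac:(lia) ltac:(lia).
rewrite e1 e2 add1n prednK; last by lia.
rewrite pm_cat sc_cat.
rewrite /pm /= -/(pm _ _).
have [c1 c2] := step_dd. rewrite c1 c2 /=.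
have [f1 f2] := @dn_out 2 (d - 2) 1 ltac:(lia) ltac:(lia).
by rewrite f1 f2 ?cats0.
Qed.

Lemma PQ_inf n : 0 < n -> ~ IdG Pw n /\ ~ IdG Qw n.
Proof.
elim/ltn_ind: n => n IH Hn.
have Hd1 : 0 < d - 1 <= d - 1 by lia.
have [Pc1 Pc2] := P_cycle Hd1.
have [Qc1 Qc2] := @Q_cycle (d - 1) ltac:(lia).
rewrite (_ : d - 1 == d.-1) in Qc1; last by apply/eqP; lia.
have Hq : forall q, (d - 1) %| n -> q = n %/ (d - 1) -> q < n /\ 0 < q.
  move=> q hdv ->; split; first by apply: ltn_Pdiv; lia.
  rewrite divn_gt0; last by lia.
  exact: dvdn_leq.
have HneP : forall t, 0 < t < d - 1 -> iter t (pm Pw) 2 != 2.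
  move=> t ht; rewrite (proj1 (P_cycle _)); [apply/eqP; lia| lia].
have HneQ : forall t, 0 < t < d - 1 -> iter t (pm Qw) 1 != 1.
  move=> t /andP[t0 t1].
  case: t t0 t1 => [//|[|t]] _ t1.
    by rewrite (_ : iter 1 (pm Qw) 1 = pm Qw 1) // (proj1 pmQ1).
  rewrite (proj1 (@Q_cycle t.+2 _)); last by lia.
  by rewrite ifF //; apply/eqP; lia.
have L2 : is_letter d 2 by rewrite /is_letter; lia.
have L1 : is_letter d 1 by rewrite /is_letter; lia.
split => HI.
- have [hdv HQ] := @descent Pw 2 (d - 1) n L2 ltac:(lia)
      ltac:(rewrite Pc1; lia) HneP HI.
  rewrite Pc2 in HQ.
  have [hq1 hq2] := Hq _ hdv erefl.
  apply: (proj2 (IH _ hq1 hq2)).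
  move: HQ.
  rewrite (_ : d.+2 - (d - 1) = 3); last by lia.
  rewrite (_ : (d - 1).-1 = (d - 3).+1); last by lia.
  rewrite /Qw /= (_ : 3 + (d - 3) = d) //; lia.
- have [hdv HP] := @descent Qw 1 (d - 1) n L1 ltac:(lia) Qc1 HneQ HI.
  rewrite Qc2 (_ : (d - 1).+1 = d) in HP; last by lia.
  have [hq1 hq2] := Hq _ hdv erefl.
  exact: (proj1 (IH _ hq1 hq2)).
Qed.

Lemma W_inf k : forall m, m + k = d -> 2 <= m -> forall n, 0 < n -> ~ IdG (Ww m) n.
Proof.
have L1 : is_letter d 1 by rewrite /is_letter; lia.
elim: k => [|k IH] m hm h2 n hn HI.
  rewrite addn0 in hm; subst m.
  have [w1 w2] := W_d.
  have [_ HP] := @descent (Ww d) 1 1 n L1 isT w1 ltac:(move=> t; lia) HI.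
  rewrite divn1 /= w2 in HP.
  exact: (proj1 (PQ_inf hn) HP).
have hmd : 2 <= m < d by lia.
have [a1 a2] := W_at1 hmd.
have [b1 b2] := W_atm hmd.
have [c1 c2] := W_at2 hmd.
have per : iter 3 (pm (Ww m)) 1 = 1.
  by rewrite !iterS /= a1 b1 c1.
have ne : forall t, 0 < t < 3 -> iter t (pm (Ww m)) 1 != 1.
  move=> [|[|[|t]]] //= _.
    by rewrite a1; apply/eqP; lia.
  by rewrite a1 b1.
have [hdv HW] := @descent (Ww m) 1 3 n L1 isT per ne HI.
have E : powsec (Ww m) 1 3 = Ww m.+1.
  rewrite !powsecS /= a1 b1 a2 b2 c2 /Ww iota_snoc.
  rewrite (_ : m.+1 - 2 = (m - 2).+1); last by lia.
  by rewrite dn_split -!catA add1n.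
rewrite E in HW.
apply: (IH m.+1 ltac:(lia) ltac:(lia) (n %/ 3) _ HW).
rewrite divn_gt0 //; exact: dvdn_leq.
Qed.

Lemma a1_inf n : 0 < n -> ~ IdG [:: 1] n.
Proof.
move=> hn HI.
have L1 : is_letter d 1 by rewrite /is_letter; lia.
have s1 : pm [:: 1] 1 = 2 /\ sc [:: 1] 1 = [:: 1].
  rewrite pm_cons sc_cons pm_nil sc_nil.
  by have [e1 e2] := @step_eq 1 ltac:(lia); rewrite e1 e2.
have s2 : pm [:: 1] 2 = 1 /\ sc [:: 1] 2 = [:: 2].
  rewrite pm_cons sc_cons pm_nil sc_nil.
  by have [e1 e2] := @step_nx 1 ltac:(lia); rewrite e1 e2.
have per : iter 2 (pm [:: 1]) 1 = 1.
  by rewrite (_ : iter 2 (pm [::1]) 1 = pm [::1] (pm [::1] 1)) // (proj1 s1) (proj1 s2).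
have ne : forall t, 0 < t < 2 -> iter t (pm [:: 1]) 1 != 1.
  move=> [|[|t]] // _.
  by rewrite (_ : iter 1 (pm [::1]) 1 = pm [::1] 1) // (proj1 s1).
have [hdv HW] := @descent [:: 1] 1 2 n L1 isT per ne HI.
have E : powsec [:: 1] 1 2 = Ww 2.
  rewrite (_ : powsec [::1] 1 2 = sc [::1] 1 ++ sc [::1] (pm [::1] 1)) //.
  by rewrite (proj1 s1) (proj2 s1) (proj2 s2).
rewrite E in HW.
apply: (@W_inf (d - 2) 2 ltac:(lia) isT (n %/ 2) _ HW).
rewrite divn_gt0 //; exact: dvdn_leq.
Qed.

End Main.

Lemma nxt_letter d x : is_letter d x -> is_letter d (nxt d x).
Proof. rewrite /is_letter /nxt => h; case: eqP => e; lia. Qed.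

Lemma nxt_inj_eq d x y : is_letter d x -> is_letter d y ->
  (nxt d x == nxt d y) = (x == y).
Proof.
rewrite /is_letter /nxt => hx hy.
case: (eqVneq x d) => ex; case: (eqVneq y d) => ey; apply/eqP/eqP; lia.
Qed.

Lemma gen_vertex d j u : is_letter d j -> is_vertex d u -> is_vertex d (gen_a d j u).
Proof.
elim: u j => [//|x w IH] j hj /andP[hx hw] /=.
case: (x == j); first by rewrite /is_vertex /= nxt_letter //; exact: IH.
case: eqP => e; last by rewrite /is_vertex /= hx.
rewrite /is_vertex /= hj /=; apply: IH => //; exact: nxt_letter.
Qed.

Lemma map_vertex d u : is_vertex d u -> is_vertex d (map (nxt d) u).
Proof.
elim: u => [//|x w IH] /andP[hx hw].
by rewrite /is_vertex /= nxt_letter //; exact: IH.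
Qed.

Lemma gen_rot d j u : is_letter d j -> is_vertex d u ->
  gen_a d (nxt d j) (map (nxt d) u) = map (nxt d) (gen_a d j u).
Proof.
elim: u j => [//|x w IH] j hj /andP[hx hw] /=.
rewrite nxt_inj_eq // nxt_inj_eq //; last exact: nxt_letter.
case: (x == j) => /=; first by rewrite IH.
case: (x == nxt d j) => //=.
by rewrite IH //; exact: nxt_letter.
Qed.

Lemma map_inj d u v : is_vertex d u -> is_vertex d v ->
  map (nxt d) u = map (nxt d) v -> u = v.
Proof.
elim: u v => [|x u IH] [|y v] //= /andP[hx hu] /andP[hy hv] [e1 e2].
have : (nxt d x == nxt d y) by rewrite e1.
rewrite nxt_inj_eq // => /eqP ->.
by rewrite (IH v).
Qed.

Lemma rot_down d j n : is_letter d j ->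
  is_identity_aut d (aut_pow (gen_a d (nxt d j)) n) ->
  is_identity_aut d (aut_pow (gen_a d j) n).
Proof.
move=> hj HI u hu.
have key : forall m v, is_vertex d v ->
   is_vertex d (iter m (gen_a d j) v) /\
   iter m (gen_a d (nxt d j)) (map (nxt d) v) = map (nxt d) (iter m (gen_a d j) v).
  move=> m v hv; elim: m => [//|m [h1 h2]].
  rewrite !iterS h2 gen_rot //; split => //; exact: gen_vertex.
have [k1 k2] := key n u hu.
apply: (map_inj k1 hu).
rewrite -k2; exact: HI (map_vertex hu).
Qed.

Theorem corollary3p7 (d i : nat) :
  3 <= d -> 1 <= i <= d ->
  forall n : nat, 0 < n -> ~ is_identity_aut d (aut_pow (gen_a d i) n).
Proof.
move=> hd hi n hn HI.
have H1 : is_identity_aut d (aut_pow (gen_a d 1) n).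
  elim: i hi HI => [//|i IH] hi HI.
  case: i IH hi HI => [|i] IH hi HI; first by [].
  apply: IH; first by lia.
  apply: rot_down; first by rewrite /is_letter; lia.
  by rewrite /nxt ifF //; apply/eqP; lia.
apply: (a1_inf hd hn) => u hu.
rewrite -[RHS](H1 u hu) /aut_pow.
by apply: eq_iter.
Qed.
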